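(* Let $G$ be a Frattini-injective pro-$p$ group. Then every finitely generated subgroup $H$ of $G$ satisfies: if $K$ is an open subgroup of $H$, then $d(K) \geq d(H)$.
   Context: $p$ is a prime; subgroups are closed. $d(H)$ is the minimal cardinality of a topological generating set of $H$. A pro-$p$ group $G$ is Frattini-injective if distinct finitely generated subgroups of $G$ have distinct Frattini subgroups. *)

(* Defs.v *)
From mathcomp Require Import all_boot all_order.
From mathcomp Require Import all_classical.
From mathcomp Require Import topology separation_axioms compact.
Set Implicit Arguments. Unset Strict Implicit. Unset Printing Implicit Defensive.
Local Open Scope classical_set_scope.

Section ProP.
Variables (T : topologicalType) (mul : T -> T -> T) (inv : T -> T) (one : T).

Definition group_axioms :=
  [/\ (forall x y z, mul x (mul y z) = mul (mul x y) z),
      (forall x, mul one x = x) & (forall x, mul (inv x) x = one)].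

Definition topological_group :=
  group_axioms /\ continuous (fun xy : T * T => mul xy.1 xy.2) /\ continuous inv.

Definition profinite_group :=
  [/\ topological_group, compact [set: T], hausdorff_space T
    & totally_disconnected [set: T]].

Definition is_subgroup (H : set T) :=
  [/\ H one, (forall x y, H x -> H y -> H (mul x y)) & (forall x, H x -> H (inv x))].

Definition is_normal (N : set T) := forall g x, N x -> N (mul (mul (inv g) x) g).

(* the index of N in G is a power of p: there are exactly p^k left cosets of N *)
Definition index_is_p_power (p : nat) (N : set T) :=
  exists k : nat, exists f : 'I_(p ^ k) -> T,
    forall g : T, exists! i : 'I_(p ^ k), exists x, N x /\ g = mul (f i) x.

Definition pro_p_group (p : nat) :=
  [/\ prime p, profinite_group &
      forall N : set T, is_subgroup N -> is_normal N -> open N -> index_is_p_power p N].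

Definition abs_gen (A : set T) : set T :=
  \bigcap_(S in [set S | is_subgroup S /\ A `<=` S]) S.
Definition top_gen (A : set T) : set T := closure (abs_gen A).

(* H is topologically generated by (the image of) n elements, i.e. by a set of
   cardinality at most n *)
Definition gen_by (H : set T) (n : nat) :=
  exists f : 'I_n -> T, top_gen (range f) = H.

Definition fin_gen (H : set T) := exists n, gen_by H n.

(* d(H): minimal cardinality of a topological generating set (meaningful for
   finitely generated H) *)
Definition d (H : set T) : nat :=
  xget 0%N [set n | gen_by H n /\ forall m, gen_by H m -> (n <= m)%N].

Definition open_in (H M : set T) := exists U : set T, open U /\ M = H `&` U.
Definition open_subgroup_of (H K : set T) :=
  [/\ is_subgroup K, K `<=` H & open_in H K].

Definition maximal_open_subgroup (H M : set T) :=
  [/\ open_subgroup_of H M, M <> H &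
      forall L, open_subgroup_of H L -> M `<=` L -> L = M \/ L = H].

(* Frattini subgroup: intersection of the maximal open subgroups of H (H if none) *)
Definition Frattini (H : set T) : set T :=
  H `&` \bigcap_(M in [set M | maximal_open_subgroup H M]) M.

Definition Frattini_injective :=
  forall H1 H2 : set T, fin_gen H1 -> fin_gen H2 ->
    Frattini H1 = Frattini H2 -> H1 = H2.

End ProP.

(* Main.v *)
Require Import Defs.
From mathcomp Require Import all_boot all_order.
From mathcomp Require Import all_fingroup all_solvable.
From mathcomp Require Import all_classical.
From mathcomp Require Import topology separation_axioms compact.
Set Implicit Arguments. Unset Strict Implicit. Unset Printing Implicit Defensive.
Local Open Scope classical_set_scope.

Local Open Scope classical_set_scope.

Section GroupAlg.
Variables (T : topologicalType) (mul : T -> T -> T) (inv : T -> T) (one : T).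
Hypothesis Hg : group_axioms mul inv one.
Local Notation "x ** y" := (mul x y) (at level 40, left associativity).

Lemma tmulA x y z : x ** (y ** z) = x ** y ** z. Proof. by case: Hg. Qed.
Lemma tmul1g x : one ** x = x. Proof. by case: Hg. Qed.
Lemma tmulVg x : inv x ** x = one. Proof. by case: Hg. Qed.
Lemma tmulgV x : x ** inv x = one.
Proof.
rewrite -[x ** inv x]tmul1g -(tmulVg (inv x)) -tmulA (tmulA (inv x) x) (tmulVg x).
by rewrite tmul1g tmulVg.
Qed.
Lemma tmulg1 x : x ** one = x. Proof. by rewrite -(tmulVg x) tmulA tmulgV tmul1g. Qed.
Lemma tmulKg x y : inv x ** (x ** y) = y. Proof. by rewrite tmulA tmulVg tmul1g. Qed.
Lemma tmulKVg x y : x ** (inv x ** y) = y. Proof. by rewrite tmulA tmulgV tmul1g. Qed.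
Lemma tmulgK x y : y ** x ** inv x = y. Proof. by rewrite -tmulA tmulgV tmulg1. Qed.
Lemma tmulgKV x y : y ** inv x ** x = y. Proof. by rewrite -tmulA tmulVg tmulg1. Qed.
Lemma tmulgI x y z : x ** y = x ** z -> y = z.
Proof. by move=> e; rewrite -(tmulKg x y) e tmulKg. Qed.
Lemma tmulIg x y z : y ** x = z ** x -> y = z.
Proof. by move=> e; rewrite -(tmulgK x y) e tmulgK. Qed.
Lemma tinvK x : inv (inv x) = x.
Proof. by apply: (@tmulIg (inv x)); rewrite tmulVg tmulgV. Qed.
Lemma tinvM x y : inv (x ** y) = inv y ** inv x.
Proof. by apply: (@tmulgI (x ** y)); rewrite tmulgV -tmulA tmulKVg tmulgV. Qed.
Lemma tinv1 : inv one = one.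
Proof. by rewrite -[inv one]tmulg1 tmulVg. Qed.
Lemma tinv_inj x y : inv x = inv y -> x = y.
Proof. by move=> e; rewrite -(tinvK x) e tinvK. Qed.

Fixpoint pw (x : T) (n : nat) : T := if n is n'.+1 then x ** pw x n' else one.
Lemma pwS x n : pw x n.+1 = x ** pw x n. Proof. by []. Qed.
Lemma pwD x m n : pw x (m + n) = pw x m ** pw x n.
Proof. by elim: m => [|m IH] /=; rewrite ?tmul1g // IH tmulA. Qed.
Lemma pwSr x n : pw x n.+1 = pw x n ** x.
Proof. by rewrite -addn1 pwD /= tmulg1. Qed.
Lemma pwM x m n : pw x (m * n) = pw (pw x m) n.
Proof. by elim: n => [|n IH]; rewrite ?muln0 //= mulnS pwD IH. Qed.
Lemma pw1 n : pw one n = one.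
Proof. by elim: n => //= n ->; rewrite tmul1g. Qed.
Lemma pw_comm x n : x ** pw x n = pw x n ** x.
Proof. by rewrite -pwS pwSr. Qed.

Lemma sg1 S : is_subgroup mul inv one S -> S one. Proof. by case. Qed.
Lemma sgM S x y : is_subgroup mul inv one S -> S x -> S y -> S (x ** y).
Proof. by case=> _ h _; apply: h. Qed.
Lemma sgV S x : is_subgroup mul inv one S -> S x -> S (inv x).
Proof. by case=> _ _ h; apply: h. Qed.
Lemma sgVr S x : is_subgroup mul inv one S -> S (inv x) -> S x.
Proof. by move=> sS /(sgV sS); rewrite tinvK. Qed.
Lemma sg_pw S x n : is_subgroup mul inv one S -> S x -> S (pw x n).
Proof. by move=> sS Sx; elim: n => [|n IH] /=; [exact: sg1|exact: sgM]. Qed.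
Lemma sgMl S x y : is_subgroup mul inv one S -> S x -> S (x ** y) -> S y.
Proof. by move=> sS Sx Sxy; rewrite -(tmulKg x y); apply: sgM (sgV sS Sx) Sxy. Qed.
Lemma sgMr S x y : is_subgroup mul inv one S -> S y -> S (x ** y) -> S x.
Proof. by move=> sS Sy Sxy; rewrite -(tmulgK y x); apply: sgM Sxy (sgV sS Sy). Qed.

Lemma sgI S1 S2 : is_subgroup mul inv one S1 -> is_subgroup mul inv one S2 ->
  is_subgroup mul inv one (S1 `&` S2).
Proof.
move=> h1 h2; split; first by split; exact: sg1.
- by move=> x y [? ?] [? ?]; split; exact: sgM.
- by move=> x [? ?]; split; exact: sgV.
Qed.

Lemma abs_gen_sub A : is_subgroup mul inv one (abs_gen mul inv one A).
Proof.
split.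
- by move=> S [sS _]; exact: sg1.
- by move=> x y hx hy S [sS AS]; apply: sgM => //; [exact: hx|exact: hy].
- by move=> x hx S [sS AS]; apply: sgV => //; exact: hx.
Qed.
Lemma abs_gen_incl A : A `<=` abs_gen mul inv one A.
Proof. by move=> x Ax S [_ AS]; exact: AS. Qed.
Lemma abs_gen_min A S : is_subgroup mul inv one S -> A `<=` S ->
  abs_gen mul inv one A `<=` S.
Proof. by move=> sS AS x; apply; split. Qed.
Lemma abs_genS A B : A `<=` B -> abs_gen mul inv one A `<=` abs_gen mul inv one B.
Proof.
move=> AB; apply: abs_gen_min; first exact: abs_gen_sub.
exact: subset_trans AB (@abs_gen_incl B).
Qed.

Lemma top_gen_incl A : A `<=` top_gen mul inv one A.
Proof. by move=> x /abs_gen_incl; apply: subset_closure. Qed.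
Lemma top_gen_closed A : closed (top_gen mul inv one A).
Proof. exact: closed_closure. Qed.
Lemma top_gen_min A S : is_subgroup mul inv one S -> closed S -> A `<=` S ->
  top_gen mul inv one A `<=` S.
Proof.
move=> sS cS AS; rewrite /top_gen (closure_id S).1 //.
by apply: closureS; exact: abs_gen_min.
Qed.

End GroupAlg.
Arguments top_gen_closed {T} mul inv one A.
Arguments top_gen_min {T mul inv one A S}.
Arguments abs_gen_min {T mul inv one A S}.


Local Open Scope classical_set_scope.

Section TopGroup.
Variables (T : topologicalType) (mul : T -> T -> T) (inv : T -> T) (one : T).
Hypothesis Htg : topological_group mul inv one.
Local Notation "x ** y" := (mul x y) (at level 40, left associativity).
Local Notation subgroup := (is_subgroup mul inv one).

Lemma tg_grp : group_axioms mul inv one. Proof. by case: Htg. Qed.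
Let Hg := tg_grp.
Local Notation mulA := (tmulA Hg).
Local Notation mul1g := (tmul1g Hg).
Local Notation mulVg := (tmulVg Hg).
Local Notation mulgV := (tmulgV Hg).
Local Notation mulg1 := (tmulg1 Hg).
Local Notation mulKg := (tmulKg Hg).
Local Notation mulKVg := (tmulKVg Hg).
Local Notation mulgK := (tmulgK Hg).
Local Notation mulgKV := (tmulgKV Hg).
Local Notation mulgI := (tmulgI Hg).
Local Notation mulIg := (tmulIg Hg).
Local Notation invK := (tinvK Hg).
Local Notation invM := (tinvM Hg).
Local Notation inv1 := (tinv1 Hg).
Local Notation inv_inj := (tinv_inj Hg).
Lemma tg_mulC : continuous (fun xy : T * T => mul xy.1 xy.2). Proof. by case: Htg => _ []. Qed.
Lemma tg_invC : continuous inv. Proof. by case: Htg => _ []. Qed.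

Lemma near_mul x y B : nbhs (x ** y) B ->
  exists P Q, [/\ nbhs x P, nbhs y Q & forall a b, P a -> Q b -> B (a ** b)].
Proof.
move=> Bn; have := @tg_mulC (x, y) B Bn.
case=> [[P Q] [/= Px Qy] PQ]; exists P, Q; split => // a b Pa Qb.
exact: (PQ (a, b)).
Qed.

Lemma cont_lmul a : continuous (mul a).
Proof.
move=> x B /near_mul [P [Q [Pa Qx h]]]; apply: filterS Qx => y Qy.
exact: h (nbhs_singleton Pa) Qy.
Qed.
Lemma cont_rmul a : continuous (mul^~ a).
Proof.
move=> x B /near_mul [P [Q [Px Qa h]]]; apply: filterS Px => y Py.
exact: h Py (nbhs_singleton Qa).
Qed.

Lemma open_pre (f : T -> T) U : continuous f -> open U -> open (f @^-1` U).
Proof. by move/continuousP; apply. Qed.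
Lemma closed_pre (f : T -> T) U : continuous f -> closed U -> closed (f @^-1` U).
Proof. by move/continuous_closedP; apply. Qed.

Lemma nbhs_lmul x a B : nbhs (a ** x) B -> nbhs x [set y | B (a ** y)].
Proof. by move=> Bn; exact: (@cont_lmul a x B Bn). Qed.
Lemma nbhs_rmul x a B : nbhs (x ** a) B -> nbhs x [set y | B (y ** a)].
Proof. by move=> Bn; exact: (@cont_rmul a x B Bn). Qed.
Lemma nbhs_inv x B : nbhs (inv x) B -> nbhs x [set y | B (inv y)].
Proof. by move=> Bn; exact: (@tg_invC x B Bn). Qed.

Lemma subgroup_open S : subgroup S -> nbhs one S -> open S.
Proof.
move=> sS S1; rewrite openE => x Sx.
have : nbhs (inv x ** x) S by rewrite mulVg.
move=> /nbhs_lmul; apply: filterS => y /= Sy.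
exact: sgMl sS (sgV sS Sx) Sy.
Qed.

Lemma open_nbhs1 U : open U -> U one -> nbhs one U.
Proof. by move=> oU U1; apply: open_nbhs_nbhs. Qed.

Lemma open_in_closed H K : subgroup H -> closed H -> subgroup K -> K `<=` H ->
  open_in H K -> closed K.
Proof.
move=> sH cH sK KH [U [oU KE]].
have U1 : U one by have := sg1 sK; rewrite KE => -[].
rewrite (closure_id K); apply/seteqP; split; first exact: subset_closure.
move=> x Kx.
have Hx : H x by rewrite (closure_id H).1 //; exact: (closureS KH).
have : nbhs (x ** inv x) U by rewrite mulgV; exact: open_nbhs1.
move=> /nbhs_rmul /Kx [k [Kk /= Uk]].
have Hk : H k by exact: KH.
have Kkx : K (k ** inv x) by rewrite KE; split => //; apply: sgM sH Hk (sgV sH Hx).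
have := sgM sK (sgV sK Kkx) Kk.
by rewrite invM invK -mulA mulVg mulg1.
Qed.

Lemma closure_subgroup A : subgroup A -> subgroup (closure A).
Proof.
move=> sA; split.
- by apply: subset_closure; exact: sg1 sA.
- move=> x y Cx Cy B /near_mul [P [Q [Px Qy h]]].
  have [a [Aa Pa]] := Cx P Px; have [b [Ab Qb]] := Cy Q Qy.
  by exists (a ** b); split; [exact: sgM sA Aa Ab|exact: h].
- move=> x Cx B /nbhs_inv /Cx [a [Aa /= Ba]].
  by exists (inv a); split => //; exact: sgV sA Aa.
Qed.

Lemma top_gen_sub A : subgroup (top_gen mul inv one A).
Proof. by apply: closure_subgroup; exact: abs_gen_sub. Qed.

End TopGroup.


Local Open Scope classical_set_scope.

Section ZeroDim.
Variable T : topologicalType.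
Hypotheses (cT : compact [set: T]) (hT : hausdorff_space T)
  (tdT : totally_disconnected [set: T]).

Lemma compact_clopen_cover x (Z : set T) : closed Z ->
  (forall z, Z z -> exists C, [/\ clopen C, C x & ~ C z]) ->
  exists C, [/\ clopen C, C x & C `&` Z = set0].
Proof.
move=> cZ hZ; apply: contrapT => nC.
pose F := filter_from [set C : set T | clopen C /\ C x] (fun C => C `&` Z).
have FF : Filter F.
  apply: filter_from_filter; first by exists setT; split => //; exact: clopenT.
  move=> A B [cA Ax] [cB Bx]; exists (A `&` B); first by split => //; exact: clopenI.
  by move=> y [[Ay By] Zy].
have PF : ProperFilter F.
  apply: filter_from_proper => C [cC Cx]; apply/set0P/eqP => C0.
  by apply: nC; exists C.
have [z [_ clz]] := cT PF (filterT).
have Zz : Z z.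
  apply: contrapT => nZz.
  have nb : nbhs z (~` Z) by apply: open_nbhs_nbhs; split => //; exact: closed_openC.
  have FZ : F Z by exists setT; [split => //; exact: clopenT|move=> y []].
  by have [y [Zy nZy]] := clz _ _ FZ nb.
have [C [cC Cx nCz]] := hZ z Zz.
have nb : nbhs z (~` C) by apply: open_nbhs_nbhs; split => //; case: cC => _ /closed_openC.
have FC : F C by exists C => // y [].
by have [y [Cy nCy]] := clz _ _ FC nb.
Qed.

Lemma ctd_zero_dim : zero_dimensional T.
Proof.
move=> x y xy.
pose Q := \bigcap_(C in [set C : set T | clopen C /\ C x]) C.
suff : ~ Q y.
  move=> /existsNP [C] /not_implyP [[cC Cx] nCy]; exists C; split => //.
have Qx : Q x by move=> C [].
have cQ : closed Q by apply: closed_bigI => C [[]].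
suff conQ : connected Q.
  move=> Qy; have := tdT (I : [set: T] x).
  have ccy : connected_component [set: T] x y by exists Q.
  move=> E; move: ccy; rewrite E => /= yx; move/eqP: xy; apply; by rewrite yx.
move=> B [b Bb] [O oO BE] [Cl cCl BE'].
have cB : closed B by rewrite BE'; exact: closedI.
pose A2 := Q `&` ~` O.
have cA2 : closed A2 by apply: closedI => //; exact: open_closedC.
have nS : set_nbhs B (~` A2).
  apply/set_nbhsP; exists (~` A2); split => //; first exact: closed_openC.
  by move=> q Bq [Qq]; apply; move: Bq; rewrite BE => -[].
have [V snV clV] := compact_normal hT cT cB nS.
pose U1 := V°; pose U2 := ~` closure V.
have oU1 : open U1 by exact: open_interior.
have oU2 : open U2 by apply: closed_openC; exact: closed_closure.
have BU1 : B `<=` U1 by move=> q Bq; exact: snV.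
have A2U2 : A2 `<=` U2 by move=> q A2q Cq; exact: (clV q Cq).
have U12 : forall q, U1 q -> U2 q -> False.
  by move=> q /interior_subset Vq; apply; exact: subset_closure.
have QU : Q `<=` U1 `|` U2.
  move=> q Qq; have [Oq|nOq] := pselect (O q).
    by left; apply: BU1; rewrite BE.
  by right; apply: A2U2.
have [C [cC Cx CZ]] : exists C, [/\ clopen C, C x & C `&` ~` (U1 `|` U2) = set0].
  apply: compact_clopen_cover.
    by apply: open_closedC; exact: openU.
  move=> z nz; have nQz : ~ Q z by move=> /QU.
  move: nQz => /existsNP [C] /not_implyP [[cC Cx] nCz]; by exists C.
have CU : C `<=` U1 `|` U2.
  move=> q Cq; apply: contrapT => nq.
  by have : (C `&` ~` (U1 `|` U2)) q by []; rewrite CZ.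
have clop (U U' : set T) : open U -> open U' -> (forall q, U q -> U' q -> False) ->
    C `<=` U `|` U' -> clopen (C `&` U).
  move=> oU oU' dis CUU; split; first by apply: openI => //; case: cC.
  have -> : C `&` U = C `&` ~` U'.
    apply/seteqP; split => q [Cq].
      by move=> Uq; split => // U'q; exact: (dis q).
    by move=> nU'q; split => //; case: (CUU q Cq).
  by apply: closedI; [case: cC|exact: open_closedC].
have [Bx|nBx] := pselect (B x).
- have cl := clop U1 U2 oU1 oU2 U12 CU.
  have QC : Q `<=` C `&` U1 by move=> q Qq; apply: Qq; split => //; split => //; exact: BU1.
  apply/seteqP; split; first by rewrite BE => q [].
  move=> q Qq; apply: contrapT => nBq.
  have A2q : A2 q by split => // Oq; apply: nBq; rewrite BE.
  by have [_ U1q] := QC q Qq; exact: (U12 q U1q (A2U2 q A2q)).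
- have U21 : forall q, U2 q -> U1 q -> False by move=> q u2 u1; exact: (U12 q u1 u2).
  have CU' : C `<=` U2 `|` U1 by move=> q /CU [] ?; [right|left].
  have cl := clop U2 U1 oU2 oU1 U21 CU'.
  have A2x : A2 x by split => // Ox; apply: nBx; rewrite BE.
  have QC : Q `<=` C `&` U2 by move=> q Qq; apply: Qq; split => //; split => //; exact: A2U2.
  have Qb : Q b by move: Bb; rewrite BE => -[].
  by have [_ U2b] := QC b Qb; exfalso; exact: (U12 b (BU1 b Bb) U2b).
Qed.

Lemma clopen_nbhs_sub x (U : set T) : open U -> U x ->
  exists C, [/\ clopen C, C x & C `<=` U].
Proof.
move=> oU Ux.
have := @zero_dimensional_cvg T x hT ctd_zero_dim cT U.
case; first exact: open_nbhs_nbhs.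
by move=> C [Cx cC] CU; exists C.
Qed.

End ZeroDim.


Local Open Scope classical_set_scope.

Section OpenNormal.
Variables (T : topologicalType) (mul : T -> T -> T) (inv : T -> T) (one : T).
Hypothesis Hpf : profinite_group mul inv one.
Local Notation "x ** y" := (mul x y) (at level 40, left associativity).
Local Notation subgroup := (is_subgroup mul inv one).
Lemma pf_tg : topological_group mul inv one. Proof. by case: Hpf. Qed.
Let Htg := pf_tg.
Let Hg := tg_grp Htg.
Local Notation mulA := (tmulA Hg).
Local Notation mul1g := (tmul1g Hg).
Local Notation mulVg := (tmulVg Hg).
Local Notation mulgV := (tmulgV Hg).
Local Notation mulg1 := (tmulg1 Hg).
Local Notation mulKg := (tmulKg Hg).
Local Notation mulKVg := (tmulKVg Hg).
Local Notation mulgK := (tmulgK Hg).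
Local Notation mulgKV := (tmulgKV Hg).
Local Notation mulgI := (tmulgI Hg).
Local Notation mulIg := (tmulIg Hg).
Local Notation invK := (tinvK Hg).
Local Notation invM := (tinvM Hg).
Local Notation inv1 := (tinv1 Hg).
Local Notation inv_inj := (tinv_inj Hg).

Lemma pf_compact : compact [set: T]. Proof. by case: Hpf. Qed.
Lemma pf_haus : hausdorff_space T. Proof. by case: Hpf. Qed.
Lemma pf_td : totally_disconnected [set: T]. Proof. by case: Hpf. Qed.

Lemma near_cover1 (P : T -> T -> Prop) :
  (forall x, nbhs ((x, one) : T * T) (fun z : T * T => P z.2 z.1)) ->
  nbhs one [set i | forall x, P i x].
Proof.
move=> h; have := (compact_near_coveringP _).1 pf_compact T (nbhs one) P _.
move=> /(_ _) H; have := H (fun x _ => h x).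
by apply: filterS => i /= Hi x; exact: Hi.
Qed.

Lemma nbhs_prod_mul x y B : nbhs (x ** y) B -> nbhs ((x, y) : T * T) (fun z : T * T => B (z.1 ** z.2)).
Proof. by move=> Bn; exact: (@tg_mulC _ _ _ _ Htg (x, y) B Bn). Qed.

Lemma nbhs_prod_fst x y (B : set T) : nbhs x B -> nbhs ((x, y) : T * T) (fun z : T * T => B z.1).
Proof.
move=> Bn; exists (B, setT) => /=; first by split => //; exact: filterT.
by move=> [a b] [].
Qed.

Lemma open_normal_sub U : open U -> U one ->
  exists W, [/\ subgroup W, is_normal mul inv W, open W & W `<=` U].
Proof.
move=> oU U1.
have [C [[oC cC] C1 CU]] := clopen_nbhs_sub pf_compact pf_haus pf_td oU U1.
pose S := [set g | forall x, C x <-> C (x ** g)].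
have sS : subgroup S.
  split.
  - by move=> x; rewrite mulg1.
  - move=> a b Sa Sb x; rewrite mulA; split.
      by move=> /(Sa x).1 /(Sb (x ** a)).1.
    by move=> /(Sb (x ** a)).2 /(Sa x).2.
  - move=> a Sa x; split.
      by move=> Cx; apply/(Sa (x ** inv a)).2; rewrite mulgKV.
    by move=> /(Sa (x ** inv a)).1; rewrite mulgKV.
have SC : S `<=` C by move=> g Sg; have := (Sg one).1 C1; rewrite mul1g.
have nS : nbhs one S.
  have := @near_cover1 (fun i x => C x <-> C (x ** i)).
  apply.
  move=> x; have [Cx|nCx] := pselect (C x).
    have n1 : nbhs (x ** one) C by rewrite mulg1; apply: open_nbhs_nbhs.
    have n2 : nbhs x C by apply: open_nbhs_nbhs.
    apply: filterS (filterI (nbhs_prod_mul n1) (nbhs_prod_fst one n2)).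
    by move=> z /= [].
  have oCc : open (~` C) by exact: closed_openC.
  have n1 : nbhs (x ** one) (~` C) by rewrite mulg1; apply: open_nbhs_nbhs.
  have n2 : nbhs x (~` C) by apply: open_nbhs_nbhs.
  apply: filterS (filterI (nbhs_prod_mul n1) (nbhs_prod_fst one n2)).
  by move=> z /= [].
pose N := [set g | forall x, S (x ** g ** inv x)].
have sN : subgroup N.
  split.
  - by move=> x; rewrite mulg1 mulgV; exact: sg1 sS.
  - move=> a b Na Nb x.
    have -> : x ** (a ** b) ** inv x = (x ** a ** inv x) ** (x ** b ** inv x).
      by rewrite !mulA mulgKV.
    exact: sgM sS (Na x) (Nb x).
  - move=> a Na x.
    have -> : x ** inv a ** inv x = inv (x ** a ** inv x).
      by rewrite !invM invK mulA.
    exact: sgV sS (Na x).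
have nN : nbhs one N.
  have := @near_cover1 (fun i x => S (x ** i ** inv x)); apply.
  move=> x.
  have e : x ** one ** inv x = one by rewrite mulg1 mulgV.
  have : nbhs (x ** one ** inv x) S by rewrite e.
  move=> /(near_mul Htg) [P [Q [Pn Qn PQ]]].
  have n1 := nbhs_prod_mul Pn.
  have n2 : nbhs x (fun y => Q (inv y)) by exact: (nbhs_inv Htg Qn).
  apply: filterS (filterI n1 (nbhs_prod_fst one n2)).
  by move=> z /= [Pz Qz]; exact: PQ.
exists N; split => //.
- move=> g x Nx y.
  have -> : y ** (inv g ** x ** g) ** inv y = (y ** inv g) ** x ** inv (y ** inv g).
    by rewrite invM invK !mulA.
  exact: Nx.
- exact (subgroup_open Htg sN nN).
- move=> g /(_ one); rewrite mul1g inv1 mulg1.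
  by move=> /SC; exact: CU.
Qed.

End OpenNormal.


Local Close Scope classical_set_scope.

Section PermRep.
Variables (T : topologicalType) (mul : T -> T -> T) (inv : T -> T) (one : T).
Hypothesis Hg : group_axioms mul inv one.
Local Notation "x ** y" := (mul x y) (at level 40, left associativity).
Local Notation subgroup := (is_subgroup mul inv one).
Variables (n : nat) (f : 'I_n -> T) (W : set T).
Hypotheses (sW : subgroup W) (nW : is_normal mul inv W)
  (hf : forall g, exists! i : 'I_n, exists x, W x /\ g = f i ** x).

Definition cls (g : T) : 'I_n :=
  projT1 (cid (hf g)).
Lemma cls_spec g : exists x, W x /\ g = f (cls g) ** x.
Proof. exact: (projT2 (cid (hf g))).1. Qed.
Lemma cls_eq g i : (exists x, W x /\ g = f i ** x) -> cls g = i.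
Proof.
move=> h; have [j [_ uj]] := hf g.
by rewrite -(uj _ (cls_spec g)) (uj _ h).
Qed.
Lemma cls_f i : cls (f i) = i.
Proof. by apply: cls_eq; exists one; split; [exact: sg1 sW|rewrite (tmulg1 Hg)]. Qed.
Lemma cls_W g h : W (inv g ** h) -> cls g = cls h.
Proof.
move=> Wgh; symmetry; apply: cls_eq.
have [x [Wx gE]] := cls_spec g.
exists (x ** (inv g ** h)); split; first exact: sgM sW Wx Wgh.
by rewrite (tmulA Hg) -gE (tmulKVg Hg).
Qed.
Lemma cls_Winv g h : cls g = cls h -> W (inv g ** h).
Proof.
move=> e; have [x [Wx gE]] := cls_spec g; have [y [Wy hE]] := cls_spec h.
rewrite gE hE e (tinvM Hg) -(tmulA Hg) (tmulKg Hg).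
exact: sgM sW (sgV sW Wx) Wy.
Qed.

Lemma normW g x : W x -> W (g ** x ** inv g).
Proof. by move=> /(nW (inv g)); rewrite (tinvK Hg). Qed.

Definition phif (g : T) (i : 'I_n) : 'I_n := cls (inv g ** f i).
Lemma phif_inj g : injective (phif g).
Proof.
move=> i j /cls_Winv; rewrite (tinvM Hg) (tinvK Hg) -(tmulA Hg) (tmulKVg Hg) => /cls_W.
by rewrite !cls_f.
Qed.
Definition phi (g : T) : {perm 'I_n} := perm (@phif_inj g).

Lemma phiE g i : phi g i = cls (inv g ** f i).
Proof. by rewrite permE. Qed.

Lemma phiM g h : phi (g ** h) = (phi g * phi h)%g.
Proof.
apply/permP => i; rewrite permM !phiE.
have [x [Wx E]] := cls_spec (inv g ** f i).
set c := cls (inv g ** f i) in E *.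
have -> : inv (g ** h) ** f i = (inv h ** f c) ** x.
  by rewrite (tinvM Hg) -(tmulA Hg) E (tmulA Hg).
apply: cls_W; rewrite (tinvM Hg) -(tmulA Hg) (tmulVg Hg) (tmulg1 Hg).
exact: sgV sW Wx.
Qed.

Lemma phi1 : phi one = 1%g.
Proof. by apply/permP => i; rewrite phiE perm1 (tinv1 Hg) (tmul1g Hg) cls_f. Qed.

Lemma phiV g : phi (inv g) = ((phi g)^-1)%g.
Proof.
apply: (@mulgI _ (phi g)); rewrite -phiM mulgV (tmulgV Hg); exact: phi1.
Qed.

Lemma phi_pw g m : phi (pw mul one g m) = ((phi g) ^+ m)%g.
Proof. by elim: m => [|m IH] /=; rewrite ?phi1 // phiM IH expgS. Qed.

Lemma phi_ker z : phi z = 1%g -> W z.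
Proof.
move=> e; pose i := cls one.
have := congr1 (fun s : {perm 'I_n} => s i) e; rewrite /= phiE perm1 -{2}(cls_f i).
move=> /cls_Winv; rewrite (tinvM Hg) (tinvK Hg) => Wx.
have := normW (f i) Wx.
by rewrite !(tmulA Hg) (tmulgV Hg) (tmul1g Hg) (tmulgK Hg).
Qed.

Lemma phi_eqW g h : phi g = phi h -> W (inv g ** h).
Proof.
move=> e; apply: phi_ker; rewrite phiM phiV e mulVg //.
Qed.

Lemma phi_W g h : W (inv g ** h) -> phi g = phi h.
Proof.
move=> Wgh; apply/permP => i; rewrite !phiE; apply: cls_W.
have W1 : W (g ** inv h).
  have := normW g (sgV sW Wgh).
  by rewrite (tinvM Hg) (tinvK Hg) (tmulA Hg) (tmulgK Hg).
have := normW (inv (f i)) W1.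
by rewrite (tinvM Hg) !(tinvK Hg) !(tmulA Hg).
Qed.

Definition img (A : set T) : {set {perm 'I_n}} :=
  finset (fun x : {perm 'I_n} => `[< exists a, A a /\ phi a = x >]).

Lemma mem_img (A : set T) a : A a -> phi a \in img A.
Proof. by move=> Aa; rewrite inE; apply/asboolP; exists a. Qed.

Lemma imgP (A : set T) x : x \in img A -> exists a, A a /\ phi a = x.
Proof. by rewrite inE => /asboolP. Qed.

Lemma img_group (A : set T) : subgroup A -> group_set (img A).
Proof.
move=> sA; apply/group_setP; split.
  by rewrite -phi1; apply: mem_img; exact: sg1 sA.
move=> x y /imgP [a [Aa <-]] /imgP [b [Ab <-]].
by rewrite -phiM; apply: mem_img; exact: sgM sA Aa Ab.
Qed.

Definition imgG (A : set T) (sA : subgroup A) : {group {perm 'I_n}} :=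
  Group (img_group sA).

Lemma img_sub (A B : set T) : (A `<=` B)%classic -> img A \subset img B.
Proof.
move=> AB; apply/fintype.subsetP => x /imgP [a [Aa <-]]; exact/mem_img/AB.
Qed.

Lemma img_back (H A : set T) x : subgroup H -> subgroup A -> (A `<=` H)%classic ->
  (forall y, W y -> H y -> A y) -> H x -> phi x \in img A -> A x.
Proof.
move=> sH sA AH WA Hx /imgP [a [Aa e]].
have Wax : W (inv a ** x) by apply: phi_eqW.
have Hax : H (inv a ** x) by apply: sgM sH (sgV sH (AH _ Aa)) Hx.
have := sgM sA Aa (WA _ Wax Hax).
by rewrite (tmulKVg Hg).
Qed.

Lemma phi_f_inj : injective (fun i => phi (f i)).
Proof.
move=> i j /= /phi_eqW /cls_W; by rewrite !cls_f.
Qed.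

Lemma card_imgT : #|img setT| = n.
Proof.
have -> : img setT = (fun i => phi (f i)) @: [set: 'I_n].
  apply/setP => x; apply/idP/idP.
    move=> /imgP [a [_ <-]].
    have [y [Wy aE]] := cls_spec a.
    have -> : phi a = phi (f (cls a)).
      symmetry; apply: phi_W; by rewrite {2}aE (tmulKg Hg).
    by apply: imset_f; rewrite inE.
  by move=> /imsetP [i _ ->]; exact: mem_img.
by rewrite card_imset ?cardsT ?card_ord //; exact: phi_f_inj.
Qed.

Lemma subgT : subgroup setT. Proof. by []. Qed.

Lemma pgroup_img (p k : nat) (A : set T) (sA : subgroup A) : prime p -> n = (p ^ k)%N ->
  pgroup p (imgG sA).
Proof.
move=> pp nE; have sub := img_sub (A := A) (B := setT) (fun _ _ => I).
apply: (pgroupS (G := imgG subgT)) => //.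
by rewrite /pgroup /= card_imgT nE pnatX pnat_id.
Qed.

End PermRep.


Local Open Scope classical_set_scope.

Section Corr.
Variables (T : topologicalType) (mul : T -> T -> T) (inv : T -> T) (one : T).
Hypothesis Htg : topological_group mul inv one.
Let Hg := tg_grp Htg.
Local Notation "x ** y" := (mul x y) (at level 40, left associativity).
Local Notation subgroup := (is_subgroup mul inv one).
Variables (n : nat) (f : 'I_n -> T) (W : set T).
Hypotheses (sW : subgroup W) (nW : is_normal mul inv W)
  (hf : forall g, exists! i : 'I_n, exists x, W x /\ g = f i ** x) (oW : open W).
Local Notation ph := (phi Hg sW hf).
Local Notation im := (img Hg sW hf).
Local Notation imG := (imgG Hg sW hf).
Local Notation phM := (phiM Hg sW hf).
Local Notation phV := (phiV Hg sW hf).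
Local Notation ph1 := (phi1 Hg sW hf).
Local Notation phpw := (phi_pw Hg sW hf).
Local Notation phEW := (@phi_eqW _ _ _ _ Hg _ _ _ sW nW hf).
Local Notation phW := (phi_W Hg sW nW hf).
Local Notation memim := (mem_img Hg sW hf).
Local Notation imP := (@imgP _ _ _ _ Hg _ _ _ sW hf).
Local Notation imsub := (img_sub Hg sW hf).
Local Notation imback := (@img_back _ _ _ _ Hg _ _ _ sW nW hf).

Variables (H : set T) (sH : subgroup H).

Definition pre (X : {set {perm 'I_n}}) : set T := [set x | H x /\ ph x \in X].

Lemma pre_sub (X : {group {perm 'I_n}}) : subgroup (pre X).
Proof.
split.
- by split; [exact: sg1 sH|rewrite ph1 group1].
- move=> x y [Hx Xx] [Hy Xy]; split; first exact: sgM sH Hx Hy.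
  by rewrite phM groupM.
- move=> x [Hx Xx]; split; first exact: sgV sH Hx.
  by rewrite phV groupV.
Qed.

Lemma pre_open (X : {set {perm 'I_n}}) : open_in H (pre X).
Proof.
exists [set x | ph x \in X]; split; last by [].
rewrite openE => x Xx.
have : nbhs (inv x ** x) W.
  by rewrite (tmulVg Hg); apply: open_nbhs_nbhs; split => //; exact: sg1 sW.
move=> /(nbhs_lmul Htg); apply: filterS => y /= Wy.
by rewrite /= -(phW Wy).
Qed.

Lemma pre_W (X : {group {perm 'I_n}}) y : W y -> H y -> pre X y.
Proof.
move=> Wy Hy; split => //.
have -> : ph y = ph one by symmetry; apply: phW; rewrite (tinv1 Hg) (tmul1g Hg).
by rewrite ph1 group1.
Qed.

Lemma img_pre (X : {set {perm 'I_n}}) : X \subset im H -> im (pre X) = X.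
Proof.
move=> XH; apply/setP => x; apply/idP/idP.
  by move=> /imP [a [[Ha Xa] <-]].
move=> Xx; have := fintype.subsetP XH x Xx => /imP [a [Ha ax]].
by rewrite -ax; apply: memim; split => //; rewrite ax.
Qed.

Lemma pre_img (Y : set T) : subgroup Y -> (Y `<=` H)%classic ->
  (forall y, W y -> H y -> Y y) -> pre (im Y) = Y.
Proof.
move=> sY YH WY; apply/seteqP; split.
  by move=> x [Hx /(imback sH sY YH WY Hx)].
by move=> y Yy; split; [exact: YH|exact: memim].
Qed.

Lemma img_eq_sub (A B : set T) : subgroup B -> (B `<=` H)%classic ->
  (forall y, W y -> H y -> B y) -> (A `<=` H)%classic -> im A \subset im B ->
  (A `<=` B)%classic.
Proof.
move=> sB BH WB AH sAB a Aa.
apply: (imback sH sB BH WB (AH _ Aa)).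
exact: (fintype.subsetP sAB) (memim Aa).
Qed.

End Corr.


Local Open Scope classical_set_scope.

Section ProP.
Variables (T : topologicalType) (mul : T -> T -> T) (inv : T -> T) (one : T) (p : nat).
Hypothesis Hpp : pro_p_group mul inv one p.
Local Notation "x ** y" := (mul x y) (at level 40, left associativity).
Local Notation subgroup := (is_subgroup mul inv one).

Lemma pp_prime : prime p. Proof. by case: Hpp. Qed.
Lemma pp_pf : profinite_group mul inv one. Proof. by case: Hpp. Qed.
Let Hpf := pp_pf.
Let Htg := pf_tg Hpf.
Let Hg := tg_grp Htg.

Lemma setup U : open U -> U one ->
  exists W k (f : 'I_(p ^ k) -> T), [/\ subgroup W, is_normal mul inv W, open W,
    W `<=` U & forall g, exists! i : 'I_(p ^ k), exists x, W x /\ g = f i ** x].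
Proof.
move=> oU U1; have [W [sW nW oW WU]] := open_normal_sub Hpf oU U1.
have [_ _ hidx] := Hpp; have [k [f hf]] := hidx W sW nW oW.
by exists W, k, f; split.
Qed.

Lemma maxP H N : subgroup H -> maximal_open_subgroup mul inv one H N ->
  (forall x, H x -> N (pw mul one x p)) /\
  (forall x y, H x -> H y -> N (inv x ** inv y ** x ** y)).
Proof.
move=> sH [[sN NH [U [oU NE]]] NneH maxN].
have U1 : U one by have := sg1 sN; rewrite NE => -[].
have [W [k [f [sW nW oW WU hf]]]] := setup oU U1.
have WN : forall y, W y -> H y -> N y by move=> y Wy Hy; rewrite NE; split => //; exact: WU.
pose Hb := imgG Hg sW hf sH; pose Nb := imgG Hg sW hf sN.
have pHb : pgroup p Hb := pgroup_img Hg sW nW hf sH pp_prime erefl.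
have mx : maximal Nb Hb.
  have : maximal_eq Nb Hb.
    apply/maximal_eqP; split; first exact: img_sub NH.
    move=> X NX XH.
    have sL := pre_sub Htg sW hf sH X.
    have oL := pre_open Htg sW nW hf oW H X.
    have LH : pre Htg sW hf H X `<=` H by move=> x [].
    have NL : N `<=` pre Htg sW hf H X.
      move=> x Nx; split; first exact: NH.
      exact: (fintype.subsetP NX) (mem_img Hg sW hf Nx).
    have imL : img Hg sW hf (pre Htg sW hf H X) = X by exact: img_pre.
    case: (maxN _ (And3 sL LH oL) NL) => LE; [left|right]; by rewrite -imL LE.
  rewrite /maximal_eq => /orP [/eqP e|//].
  exfalso; apply: NneH; apply/seteqP; split => // h Hh.
  apply: (@img_back _ _ _ _ Hg _ _ _ sW nW hf _ _ _ sH sN NH WN Hh).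
  have e2 : img Hg sW hf N = img Hg sW hf H := e.
  have : phi Hg sW hf h \in img Hg sW hf N by rewrite e2; exact: mem_img.
  exact.
have PhiN := Phi_sub_max mx.
have PhiE := Phi_joing pHb.
split.
- move=> x Hx; apply: (@img_back _ _ _ _ Hg _ _ _ sW nW hf _ _ _ sH sN NH WN (sg_pw p sH Hx)).
  rewrite phi_pw; apply: (fintype.subsetP PhiN); rewrite PhiE.
  apply: (fintype.subsetP (joing_subr _ _)).
  have Hbx : phi Hg sW hf x \in Hb by exact: mem_img.
  have := Mho_p_elt 1 Hbx (mem_p_elt pHb Hbx).
  by rewrite expn1.
- move=> x y Hx Hy.
  have Hxy : H (inv x ** inv y ** x ** y).
    by apply: (sgM sH _ Hy); apply: (sgM sH _ Hx); apply: (sgM sH (sgV sH Hx) (sgV sH Hy)).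
  apply: (@img_back _ _ _ _ Hg _ _ _ sW nW hf _ _ _ sH sN NH WN Hxy).
  have -> : phi Hg sW hf (inv x ** inv y ** x ** y) =
     [~ phi Hg sW hf x, phi Hg sW hf y]%g.
    by rewrite !phiM !phiV /commg /conjg !mulgA.
  apply: (fintype.subsetP PhiN); rewrite PhiE.
  apply: (fintype.subsetP (joing_subl _ _)); rewrite derg1.
  by apply: mem_commg; exact: mem_img.
Qed.

Lemma max_exists H X : subgroup H -> closed H -> X `<=` H ->
  top_gen mul inv one X <> H ->
  exists M, maximal_open_subgroup mul inv one H M /\ top_gen mul inv one X `<=` M.
Proof.
move=> sH cH XH LneH.
set L := top_gen mul inv one X.
have sL : subgroup L := top_gen_sub Htg X.
have cL : closed L := top_gen_closed mul inv one X.
have LH : L `<=` H := top_gen_min sH cH XH.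
have [h [Hh nLh]] : exists h, H h /\ ~ L h.
  apply: contrapT => nex; apply: LneH; apply/seteqP; split => // h Hh.
  by apply: contrapT => nLh; apply: nex; exists h.
pose U := [set z | ~ L (h ** inv z)].
have oU : open U.
  have ct : continuous (mul h \o inv).
    by move=> x; apply: continuous_comp; [exact: (@tg_invC _ _ _ _ Htg x)|exact: (@cont_lmul _ _ _ _ Htg h (inv x))].
  have := open_pre ct (closed_openC cL); by [].
have U1 : U one by rewrite /U /= (tinv1 Hg) (tmulg1 Hg).
have [W [k [f [sW nW oW WU hf]]]] := setup oU U1.
have nLb : phi Hg sW hf h \notin img Hg sW hf L.
  apply/negP => /imgP [a [La e]].
  have := WU _ (@phi_eqW _ _ _ _ Hg _ _ _ sW nW hf _ _ e).
  by rewrite /U /= (tinvM Hg) (tinvK Hg) (tmulKVg Hg).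
pose Hb := imgG Hg sW hf sH; pose Lb := imgG Hg sW hf sL.
have LbHb : Lb \subset Hb by exact: img_sub.
have [e|[Mb mx LMb]] := maximal_exists LbHb.
  by exfalso; move: nLb; rewrite /= -[img Hg sW hf L]/(gval Lb) e; rewrite mem_img.
have MbHb : Mb \subset Hb by apply: proper_sub; exact: (maxgroupp mx).
pose M := pre Htg sW hf H Mb.
have sM : subgroup M := pre_sub Htg sW hf sH Mb.
have oM := pre_open Htg sW nW hf oW H Mb.
have MH : M `<=` H by move=> x [].
have WM : forall y, W y -> H y -> M y by move=> y; exact: pre_W.
have imM : img Hg sW hf M = Mb by exact: img_pre.
exists M; split; last first.
  move=> l Ll; split; first exact: LH.
  by apply: (fintype.subsetP LMb); exact: mem_img.
split; first by split.
- move=> MeH; have : Mb \proper Hb by exact: (maxgroupp mx).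
  move=> /andP [_ /negP]; apply; rewrite -imM MeH; exact: fintype.subxx.
- move=> Y [sY YH oY] MY.
  have WY : forall y, W y -> H y -> Y y by move=> y Wy Hy; apply: MY; exact: WM.
  pose Yb := imgG Hg sW hf sY.
  have MbYb : Mb \subset Yb by rewrite -imM; exact: img_sub.
  have YbHb : Yb \subset Hb by exact: img_sub.
  have : maximal_eq Mb Hb by rewrite /maximal_eq mx orbT.
  move=> /maximal_eqP [_ /(_ Yb MbYb YbHb)] [eYM|eYH].
    left; apply/seteqP; split => //.
    have h1 : img Hg sW hf Y \subset img Hg sW hf M.
      by rewrite imM -eYM; exact: fintype.subxx.
    exact: (img_eq_sub nW sH sM MH WM YH h1).
  right; apply/seteqP; split => //.
  have h1 : img Hg sW hf H \subset img Hg sW hf Y.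
    by rewrite -[img Hg sW hf H]/(gval Hb) -eYH; exact: fintype.subxx.
  exact: (img_eq_sub nW sH sY YH WY (fun _ h => h) h1).
Qed.

End ProP.


Local Open Scope classical_set_scope.

Section Main1.
Variables (T : topologicalType) (mul : T -> T -> T) (inv : T -> T) (one : T) (p : nat).
Hypothesis Hpp : pro_p_group mul inv one p.
Local Notation "x ** y" := (mul x y) (at level 40, left associativity).
Local Notation subgroup := (is_subgroup mul inv one).
Local Notation maxl := (maximal_open_subgroup mul inv one).
Local Notation osub := (open_subgroup_of mul inv one).
Local Notation Phi := (Defs.Frattini mul inv one).
Local Notation pw := (pw mul one).
Let Hpf := pp_pf Hpp.
Let Htg := pf_tg Hpf.
Let Hg := tg_grp Htg.
Local Notation mulA := (tmulA Hg).
Local Notation mul1g := (tmul1g Hg).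
Local Notation mulVg := (tmulVg Hg).
Local Notation mulgV := (tmulgV Hg).
Local Notation mulg1 := (tmulg1 Hg).
Local Notation mulKg := (tmulKg Hg).
Local Notation mulKVg := (tmulKVg Hg).
Local Notation mulgK := (tmulgK Hg).
Local Notation mulgKV := (tmulgKV Hg).
Local Notation invK := (tinvK Hg).
Local Notation invM := (tinvM Hg).
Local Notation inv1 := (tinv1 Hg).
Local Notation pwD := (pwD Hg).
Local Notation pwM := (pwM Hg).
Local Notation pwSr := (pwSr Hg).

Lemma p_gt0 : (0 < p)%N. Proof. exact: prime_gt0 (pp_prime Hpp). Qed.

Lemma max_sub H N : maxl H N -> subgroup N. Proof. by case=> [[]]. Qed.
Lemma max_incl H N : maxl H N -> N `<=` H. Proof. by case=> [[]]. Qed.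
Lemma max_neq H N : maxl H N -> N <> H. Proof. by case. Qed.
Lemma max_max H N L : maxl H N -> osub H L -> N `<=` L -> L = N \/ L = H.
Proof. by case=> _ _; apply. Qed.
Lemma max_open H N : maxl H N -> open_in H N. Proof. by case=> [[]]. Qed.

Lemma max_pw H N x : subgroup H -> maxl H N -> H x -> N (pw x p).
Proof. by move=> sH mN; have [h _] := maxP Hpp sH mN; exact: h. Qed.

Lemma max_normal H N a y : subgroup H -> maxl H N -> H a -> N y -> N (a ** y ** inv a).
Proof.
move=> sH mN Ha Ny; have [_ h] := maxP Hpp sH mN.
have Hy : H y by exact: max_incl mN _ Ny.
have := h (inv a) (inv y) (sgV sH Ha) (sgV sH Hy).
rewrite !invK => Nc.
have := sgM (max_sub mN) Nc Ny.
by rewrite mulgKV.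
Qed.

Lemma max_closed H N : subgroup H -> closed H -> maxl H N -> closed N.
Proof.
move=> sH cH mN; apply: (open_in_closed Htg sH cH (max_sub mN) (max_incl mN)).
exact: max_open mN.
Qed.

Lemma lemA H N x : subgroup H -> maxl H N -> H x -> ~ N x ->
  forall y, H y -> exists i, N (pw x i ** y).
Proof.
move=> sH mN Hx nNx.
have sN := max_sub mN; have NH := max_incl mN.
have [U [oU NE]] := max_open mN.
pose S := [set z | H z /\ exists i, N (pw x i ** z)].
have Hpw i : H (pw x i) by exact: sg_pw i sH Hx.
have sS : subgroup S.
  split.
  - split; first exact: sg1 sH.
    by exists 0%N; rewrite /= mulg1; exact: sg1 sN.
  - move=> z1 z2 [Hz1 [i Ni]] [Hz2 [j Nj]]; split; first exact: sgM sH Hz1 Hz2.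
    exists (j + i)%N.
    have := sgM sN (max_normal sH mN (Hpw j) Ni) Nj.
    by rewrite pwD !mulA mulgKV.
  - move=> z [Hz [i Ni]]; split; first exact: sgV sH Hz.
    exists (p.-1 * i)%N.
    have Ni' := max_normal sH mN (Hpw (p.-1 * i)%N) (sgV sN Ni).
    have Np : N (pw (pw x p) i) by apply: (sg_pw i sN); exact: max_pw sH mN Hx.
    have e : pw (pw x p) i = pw x (p.-1 * i) ** pw x i.
      by rewrite -pwM -pwD -mulSnr prednK // p_gt0.
    rewrite e in Np.
    have := sgM sN Ni' Np.
    by rewrite invM !mulA !mulgKV.
have SH : S `<=` H by move=> z [].
have oS : open_in H S.
  exists [set z | exists i, U (pw x i ** z)]; split.
    rewrite openE => z [i Ui].
    have : nbhs (pw x i ** z) U by apply: open_nbhs_nbhs.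
    by move=> /(nbhs_lmul Htg); apply: filterS => w Uw; exists i.
  apply/seteqP; split.
    by move=> z [Hz [i]]; rewrite NE => -[_ Ui]; split => //; exists i.
  by move=> z [Hz [i Ui]]; split => //; exists i; rewrite NE; split => //; exact: sgM sH (Hpw i) Hz.
have NS : N `<=` S by move=> z Nz; split; [exact: NH|exists 0%N; rewrite /= mul1g].
case: (max_max mN (And3 sS SH oS) NS) => SE.
  exfalso; apply: nNx; rewrite -SE; split => //; exists p.-1.
  by rewrite -pwSr prednK ?p_gt0 //; exact: max_pw sH mN Hx.
move=> y Hy; have : S y by rewrite SE.
by case.
Qed.

End Main1.


Local Open Scope classical_set_scope.

Section Main2.
Variables (T : topologicalType) (mul : T -> T -> T) (inv : T -> T) (one : T) (p : nat).
Hypothesis Hpp : pro_p_group mul inv one p.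
Local Notation "x ** y" := (mul x y) (at level 40, left associativity).
Local Notation subgroup := (is_subgroup mul inv one).
Local Notation maxl := (maximal_open_subgroup mul inv one).
Local Notation osub := (open_subgroup_of mul inv one).
Local Notation Phi := (Defs.Frattini mul inv one).
Local Notation pw := (pw mul one).
Let Hpf := pp_pf Hpp.
Let Htg := pf_tg Hpf.
Let Hg := tg_grp Htg.
Local Notation mulA := (tmulA Hg).
Local Notation mul1g := (tmul1g Hg).
Local Notation mulVg := (tmulVg Hg).
Local Notation mulgV := (tmulgV Hg).
Local Notation mulg1 := (tmulg1 Hg).
Local Notation mulKg := (tmulKg Hg).
Local Notation mulKVg := (tmulKVg Hg).
Local Notation mulgK := (tmulgK Hg).
Local Notation mulgKV := (tmulgKV Hg).
Local Notation invK := (tinvK Hg).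
Local Notation invM := (tinvM Hg).
Local Notation inv1 := (tinv1 Hg).
Local Notation pwD := (pwD Hg).
Local Notation pwM := (pwM Hg).
Local Notation pwSr := (pwSr Hg).


Lemma max_osub H N : maxl H N -> osub H N. Proof. by case. Qed.

Lemma frat_sub X : Phi X `<=` X. Proof. by move=> y []. Qed.
Lemma frat_max X N : maxl X N -> Phi X `<=` N.
Proof. by move=> mN y [_ h]; exact: h N mN. Qed.
Lemma frat_intro X y : X y -> (forall N, maxl X N -> N y) -> Phi X y.
Proof. by move=> Xy h; split => // N; exact: h. Qed.

Lemma frat_pw X z : subgroup X -> X z -> Phi X (pw z p).
Proof.
move=> sX Xz; apply: frat_intro; first exact: sg_pw p sX Xz.
by move=> N mN; exact (max_pw Hpp sX mN Xz).
Qed.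

Lemma inter_max H M N : subgroup H -> maxl H M -> maxl H N -> M <> N -> maxl M (M `&` N).
Proof.
move=> sH mM mN MneN.
have sM := max_sub mM; have sN := max_sub mN.
have MH := max_incl mM; have NH := max_incl mN.
have [U [oU NE]] := max_open mN.
split.
- split; first exact: sgI sM sN.
    by move=> z [].
  exists U; split => //; apply/seteqP; split.
    by move=> z [Mz Nz]; split => //; move: Nz; rewrite NE => -[].
  by move=> z [Mz Uz]; split => //; rewrite NE; split => //; exact: MH.
- move=> e; have MN : M `<=` N by rewrite -e => z [].
  case: (max_max mM (max_osub mN) MN) => eN; first exact: MneN (esym eN).
  exact: max_neq mN eN.
- move=> L [sL LM oL] MNL.
  have [LN|] := pselect (L `<=` N).
    by left; apply/seteqP; split => // z Lz; split; [exact: LM|exact: LN].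
  move=> /existsNP [x] /not_implyP [Lx nNx].
  right; apply/seteqP; split => // y My.
  have [i Ni] := lemA Hpp sH mN (MH _ (LM _ Lx)) nNx (MH _ My).
  have Lxi : L (pw x i) by exact: sg_pw i sL Lx.
  have : L (pw x i ** y).
    apply: MNL; split => //; apply: sgM sM _ My; exact: LM.
  exact (sgMl Hg sL Lxi).
Qed.

Lemma frat_M_sub H M : subgroup H -> maxl H M -> Phi M `<=` Phi H.
Proof.
move=> sH mM y PMy; have My := frat_sub PMy.
apply: frat_intro; first exact: max_incl mM _ My.
move=> N mN; have [<-|MneN] := pselect (M = N); first by [].
by have [] := frat_max (inter_max sH mM mN MneN) PMy.
Qed.

Lemma pw_coprime N x i : subgroup N -> N (pw x i) -> N (pw x p) -> ~~ (p %| i)%N -> N x.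
Proof.
move=> sN Ni Np ndv.
have [a _ dv] := Bezoutr i (p_gt0 Hpp).
have g1 : gcdn i p = 1%N.
  by apply/eqP; rewrite gcdnC; have := prime_coprime i (pp_prime Hpp); rewrite ndv.
rewrite g1 in dv.
have Nai : N (pw x (a * i)) by rewrite mulnC pwM; exact: sg_pw a sN Ni.
have N1 : N (pw x (1 + a * i)).
  by rewrite -(divnK dv) mulnC pwM; exact: sg_pw _ sN Np.
move: N1; rewrite add1n pwS => N1.
have := sgM sN N1 (sgV sN Nai).
by rewrite mulgK.
Qed.

Lemma coset_subgroup (H A : set T) x : subgroup H -> subgroup A -> A `<=` H ->
  (forall a w, H a -> A w -> A (a ** w ** inv a)) -> H x -> A (pw x p) ->
  subgroup [set z | H z /\ exists i, A (pw x i ** z)].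
Proof.
move=> sH sA AH nA Hx Ap.
have Hpw i : H (pw x i) by exact: sg_pw i sH Hx.
split.
- split; first exact: sg1 sH.
  by exists 0%N; rewrite /= mulg1; exact: sg1 sA.
- move=> z1 z2 [Hz1 [i Ni]] [Hz2 [j Nj]]; split; first exact: sgM sH Hz1 Hz2.
  exists (j + i)%N.
  have := sgM sA (nA _ _ (Hpw j) Ni) Nj.
  by rewrite pwD !mulA mulgKV.
- move=> z [Hz [i Ni]]; split; first exact: sgV sH Hz.
  exists (p.-1 * i)%N.
  have Ni' := nA _ _ (Hpw (p.-1 * i)%N) (sgV sA Ni).
  have Np : A (pw (pw x p) i) by apply: (sg_pw i sA).
  have e : pw (pw x p) i = pw x (p.-1 * i) ** pw x i.
    by rewrite -pwM -pwD -mulSnr prednK // (p_gt0 Hpp).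
  rewrite e in Np.
  have := sgM sA Ni' Np.
  by rewrite invM !mulA !mulgKV.
Qed.

Lemma coset_closed (A : set T) x : subgroup A -> closed A -> A (pw x p) ->
  closed [set z | exists i, A (pw x i ** z)].
Proof.
move=> sA cA Ap.
pose Sb k := [set z | exists i, (i < k)%N /\ A (pw x i ** z)].
have cSb k : closed (Sb k).
  elim: k => [|k IH].
    have -> : Sb 0%N = set0 by apply/seteqP; split => // z [i []].
    exact: closed0.
  have -> : Sb k.+1 = Sb k `|` [set z | A (pw x k ** z)].
    apply/seteqP; split.
      move=> z [i [ik Ai]]; move: ik; rewrite ltnS leq_eqVlt => /orP [/eqP ik|ik].
        by right; rewrite -ik.
      by left; exists i.
    by move=> z [[i [ik Ai]]|Ak]; [exists i; split => //; exact: ltnW|exists k].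
  apply: closedU => //.
  exact: (@closed_pre T (mul (pw x k)) A (@cont_lmul _ _ _ _ Htg (pw x k)) cA).
have -> : [set z | exists i, A (pw x i ** z)] = Sb p.
  apply/seteqP; split; last by move=> z [i [_ Ai]]; exists i.
  move=> z [i Ai]; exists (i %% p)%N; split; first by rewrite ltn_mod (p_gt0 Hpp).
  move: Ai; rewrite {1}(divn_eq i p) pwD mulnC pwM -mulA.
  by apply: (sgMl Hg sA); exact: sg_pw _ sA Ap.
exact: cSb.
Qed.

End Main2.


Local Open Scope classical_set_scope.

Section Main3.
Variables (T : topologicalType) (mul : T -> T -> T) (inv : T -> T) (one : T) (p : nat).
Hypothesis Hpp : pro_p_group mul inv one p.
Local Notation "x ** y" := (mul x y) (at level 40, left associativity).
Local Notation subgroup := (is_subgroup mul inv one).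
Local Notation maxl := (maximal_open_subgroup mul inv one).
Local Notation osub := (open_subgroup_of mul inv one).
Local Notation Phi := (Defs.Frattini mul inv one).
Local Notation pw := (pw mul one).
Let Hpf := pp_pf Hpp.
Let Htg := pf_tg Hpf.
Let Hg := tg_grp Htg.
Local Notation mulA := (tmulA Hg).
Local Notation mul1g := (tmul1g Hg).
Local Notation mulVg := (tmulVg Hg).
Local Notation mulgV := (tmulgV Hg).
Local Notation mulg1 := (tmulg1 Hg).
Local Notation mulKg := (tmulKg Hg).
Local Notation mulKVg := (tmulKVg Hg).
Local Notation mulgK := (tmulgK Hg).
Local Notation mulgKV := (tmulgKV Hg).
Local Notation invK := (tinvK Hg).
Local Notation invM := (tinvM Hg).
Local Notation inv1 := (tinv1 Hg).
Local Notation pwD := (pwD Hg).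
Local Notation pwM := (pwM Hg).
Local Notation pwSr := (pwSr Hg).



Lemma main_step H M n (m : 'I_n -> T) :
  Frattini_injective mul inv one -> subgroup H -> closed H -> fin_gen mul inv one H ->
  maxl H M -> top_gen mul inv one (range m) = M -> gen_by mul inv one H n.
Proof.
move=> FI sH cH fgH mM mE.
apply: contrapT => ngen.
have sM := max_sub mM; have MH := max_incl mM.
have cM : closed M by rewrite -mE; exact: top_gen_closed.
have Mm j : M (m j) by rewrite -mE; apply: top_gen_incl; exists j.
have s1 := frat_M_sub Hpp sH mM.
have s2 : Phi H `<=` Phi M.
  move=> y Py; have My : M y := frat_max mM Py.
  apply: frat_intro => // N' mN'.
  apply: contrapT => nN'y; apply: ngen.
  have sN' := max_sub mN'; have N'M := max_incl mN'.
  have cN' : closed N' := max_closed Hpp sM cM mN'.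
  have [j0 nN'x] : exists j0, ~ N' (m j0).
    apply: contrapT => hn; apply: (max_neq mN'); apply/seteqP; split => //.
    rewrite -{1}mE; apply: (top_gen_min sN' cN').
    by move=> _ [j _ <-]; apply: contrapT => nj; apply: hn; exists j.
  set x := m j0.
  have Mx : M x := Mm j0.
  have ch : forall j, exists i, N' (pw x i ** m j).
    by move=> j; exact: (lemA Hpp sM mN' Mx nN'x (Mm j)).
  have [ij hij] := choice ch.
  have [h [Hh nMh]] : exists h, H h /\ ~ M h.
    apply: contrapT => nex; apply: (max_neq mM); apply/seteqP; split => // z Hz.
    by apply: contrapT => nMz; apply: nex; exists z.
  pose g j := if j == j0 then h else pw x (ij j) ** m j.
  exists g.
  apply: contrapT => gne.
  have rgH : range g `<=` H.
    move=> _ [j _ <-]; rewrite /g; case: ifP => _ //.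
    by apply: MH; apply: (sgM sM _ (Mm j)); exact: (sg_pw _ sM Mx).
  have [M0 [mM0 gM0]] := max_exists Hpp sH cH rgH gne.
  have sM0 := max_sub mM0; have M0H := max_incl mM0.
  have cM0 : closed M0 := max_closed Hpp sH cH mM0.
  have gM0' j : M0 (g j) by apply: gM0; apply: top_gen_incl; exists j.
  have M0h : M0 h by have := gM0' j0; rewrite /g eqxx.
  have M0y : M0 y := frat_max mM0 Py.
  pose A := M0 `&` N'.
  have sA : subgroup A := sgI sM0 sN'.
  have AM : A `<=` M by move=> z [_ /N'M].
  have cA : closed A := closedI cM0 cN'.
  have nA : forall a w, M a -> A w -> A (a ** w ** inv a).
    move=> a w Ma [M0w N'w]; split.
      exact: (max_normal Hpp sH mM0 (MH _ Ma) M0w).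
    exact: (max_normal Hpp sM mN' Ma N'w).
  have Apw : forall z, M z -> A (pw z p).
    move=> z Mz; split; last exact: (max_pw Hpp sM mN' Mz).
    apply: (frat_max mM0); apply: s1; exact: (frat_pw Hpp sM Mz).
  pose S' := [set z | M z /\ exists i, A (pw x i ** z)].
  have sS' : subgroup S' := coset_subgroup Hpp sM sA AM nA Mx (Apw _ Mx).
  have cS' : closed S'.
    have -> : S' = M `&` [set z | exists i, A (pw x i ** z)] by [].
    apply: closedI => //; exact: (coset_closed Hpp sA cA (Apw _ Mx)).
  have MS' : M `<=` S'.
    rewrite -{1}mE; apply: (top_gen_min sS' cS').
    move=> _ [j _ <-]; split; first exact: Mm j.
    have [e|ne] := eqVneq j j0.
      exists p.-1; rewrite e -/x -pwSr prednK ?(p_gt0 Hpp) //; exact: Apw.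
    exists (ij j); split; last exact: hij.
    by have := gM0' j; rewrite /g (negbTE ne).
  have N'M0 : N' `<=` M0.
    move=> z N'z; have [_ [i Ai]] := MS' _ (N'M _ N'z).
    have N'xi : N' (pw x i) by exact: (sgMr Hg sN' N'z Ai.2).
    have [dv|ndv] := boolP (p %| i)%N.
      have Axi : A (pw x i).
        by rewrite -(divnK dv) mulnC pwM; apply: (sg_pw _ sA); exact: Apw.
      exact: (sgMl Hg sM0 Axi.1 Ai.1).
    by exfalso; apply: nN'x; exact: (pw_coprime Hpp sN' N'xi (Apw _ Mx).2 ndv).
  have MM0 : M `<=` M0.
    move=> w Mw; have [i N'i] := lemA Hpp sM mN' My nN'y Mw.
    have M0yi : M0 (pw y i) := sg_pw i sM0 M0y.
    exact: (sgMl Hg sM0 M0yi (N'M0 _ N'i)).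
  case: (max_max mM (max_osub mM0) MM0) => e.
    by apply: nMh; rewrite -e.
  exact: (max_neq mM0 e).
have e : Phi M = Phi H by apply/seteqP; split.
have fgM : fin_gen mul inv one M by exists n, m.
exact: (max_neq mM (FI M H fgM fgH e)).
Qed.

End Main3.


Local Open Scope classical_set_scope.

Lemma compact_list (T : topologicalType) (C : set T) (O : T -> set T) :
  compact C -> (forall x, C x -> nbhs x (O x)) ->
  exists R : seq T, (forall r, r \in R -> C r) /\
    (forall y, C y -> exists2 r, r \in R & O r y).
Proof.
move=> cC nO; apply: contrapT => nR.
pose cov (R : seq T) := [set y | exists2 r, r \in R & O r y].
pose F := filter_from [set R : seq T | forall r, r \in R -> C r] (fun R => C `\` cov R).
have FF : Filter F.
  apply: filter_from_filter; first by exists [::].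
  move=> R1 R2 h1 h2; exists (R1 ++ R2).
    by move=> r; rewrite mem_cat => /orP [/h1|/h2].
  move=> y [Cy ncov]; split; split => // -[r rR Ory]; apply: ncov; exists r => //;
    by rewrite mem_cat rR ?orbT.
have PF : ProperFilter F.
  apply: filter_from_proper => R hR; apply: contrapT => e; apply: nR; exists R; split; first exact: hR.
  move=> y Cy; apply: contrapT => ncy; apply: e; exists y; split => //.
have FC : F C by exists [::] => // y [].
have [z [Cz clz]] := cC F PF FC.
have Fz : F (C `\` cov [:: z]) by exists [:: z] => // r; rewrite inE => /eqP ->.
have [y [[_ ncov] Oy]] := clz _ _ Fz (nO z Cz).
by apply: ncov; exists z; rewrite ?inE.
Qed.


Section Main4.
Variables (T : topologicalType) (mul : T -> T -> T) (inv : T -> T) (one : T) (p : nat).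
Hypothesis Hpp : pro_p_group mul inv one p.
Local Notation "x ** y" := (mul x y) (at level 40, left associativity).
Local Notation subgroup := (is_subgroup mul inv one).
Local Notation maxl := (maximal_open_subgroup mul inv one).
Local Notation osub := (open_subgroup_of mul inv one).
Local Notation Phi := (Defs.Frattini mul inv one).
Local Notation pw := (pw mul one).
Let Hpf := pp_pf Hpp.
Let Htg := pf_tg Hpf.
Let Hg := tg_grp Htg.
Local Notation mulA := (tmulA Hg).
Local Notation mul1g := (tmul1g Hg).
Local Notation mulVg := (tmulVg Hg).
Local Notation mulgV := (tmulgV Hg).
Local Notation mulg1 := (tmulg1 Hg).
Local Notation mulKg := (tmulKg Hg).
Local Notation mulKVg := (tmulKVg Hg).
Local Notation mulgK := (tmulgK Hg).
Local Notation mulgKV := (tmulgKV Hg).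
Local Notation invK := (tinvK Hg).
Local Notation invM := (tinvM Hg).
Local Notation inv1 := (tinv1 Hg).
Local Notation pwD := (pwD Hg).
Local Notation pwM := (pwM Hg).
Local Notation pwSr := (pwSr Hg).




Lemma fin_gen_sub H : fin_gen mul inv one H -> subgroup H /\ closed H.
Proof.
case=> n [s <-]; split; first exact (top_gen_sub Htg _).
exact: top_gen_closed.
Qed.

Lemma schreier H K : fin_gen mul inv one H -> osub H K -> fin_gen mul inv one K.
Proof.
move=> fgH [sK KH [U [oU KE]]].
have [sH cH] := fin_gen_sub fgH.
case: fgH => n [s sE].
have U1 : U one by have := sg1 sK; rewrite KE => -[].
have cK : closed K.
  by apply: (open_in_closed Htg sH cH sK KH); exists U.
have cpH : compact H := subclosed_compact cH (pf_compact Hpf) (fun _ _ => I).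
have nO : forall x, H x -> nbhs x [set y | U (y ** inv x)].
  move=> x Hx; have : nbhs (x ** inv x) U by rewrite mulgV; exact: open_nbhs_nbhs.
  by move=> /(nbhs_rmul Htg).
have [R [RH Rcov]] := compact_list cpH nO.
pose R' := one :: R.
have R'H r : r \in R' -> H r by rewrite inE => /orP [/eqP ->|/RH]; [exact: sg1 sH|].
pose P y r := `[< K (y ** inv r) >].
pose rep y := nth one R' (find (P y) R').
have KinvE y : H y -> forall r, H r -> U (y ** inv r) -> K (y ** inv r).
  by move=> Hy r Hr Ur; rewrite KE; split => //; exact: sgM sH Hy (sgV sH Hr).
have has_rep y : H y -> has (P y) R'.
  move=> Hy; have [r rR Or] := Rcov y Hy; apply/hasP; exists r.
    by rewrite inE rR orbT.
  by apply/asboolP; apply: KinvE => //; exact: RH.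
have rep_spec y : H y -> K (y ** inv (rep y)) /\ rep y \in R'.
  move=> Hy; have hy := has_rep y Hy; split.
    by have := nth_find one hy => /asboolP.
  by apply: mem_nth; rewrite -has_find.
have rep_eq y z : K (y ** inv z) -> rep y = rep z.
  move=> Kyz; rewrite /rep; congr nth; apply: eq_find => r.
  rewrite /P; apply/asboolP/asboolP => h.
    have := sgM sK (sgV sK Kyz) h.
    by rewrite invM invK mulA mulgKV.
  have := sgM sK Kyz h.
  by rewrite mulA mulgKV.
have rep_K y : K y -> rep y = one.
  move=> Ky; rewrite /rep /= ifT //; apply/asboolP; by rewrite inv1 mulg1.
have rep_rep y : H y -> rep (rep y) = rep y.
  move=> Hy; apply: rep_eq; have [h _] := rep_spec y Hy.
  have := sgV sK h; by rewrite invM invK.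
pose Rt := [seq rep r | r <- R'].
have RtH t : t \in Rt -> H t.
  by move=> /mapP [r rR ->]; have [_ h] := rep_spec r (R'H _ rR); exact: (R'H _ h).
have Rt_rep t : t \in Rt -> rep t = t.
  by move=> /mapP [r rR ->]; apply: rep_rep; exact: R'H.
have rep_in y : H y -> rep y \in Rt.
  move=> Hy; rewrite -rep_rep //; apply: map_f; by have [] := rep_spec y Hy.
have one_Rt : one \in Rt by rewrite -(rep_K one (sg1 sK)); apply: map_f; rewrite inE eqxx.
pose Sch := [seq t ** s j ** inv (rep (t ** s j)) | t <- Rt, j <- enum 'I_n].
pose gen (k : 'I_(size Sch)) := nth one Sch k.
have rgen y : y \in Sch -> range gen y.
  by move=> yS; exists (Ordinal (etrans (index_mem y Sch) yS)) => //; rewrite /gen nth_index.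
have genS k : gen k \in Sch by apply: mem_nth.
pose A := abs_gen mul inv one (range gen).
have sA : subgroup A := abs_gen_sub mul inv one (range gen).
have Hs j : H (s j) by rewrite -sE; apply: top_gen_incl; exists j.
pose Q := [set x | H x /\ forall t, t \in Rt -> A (t ** x ** inv (rep (t ** x)))].
have sQ : subgroup Q.
  split.
  - split; first exact: sg1 sH.
    by move=> t tR; rewrite mulg1 Rt_rep // mulgV; exact: sg1 sA.
  - move=> x y [Hx Qx] [Hy Qy]; split; first exact: sgM sH Hx Hy.
    move=> t tR.
    have txH : H (t ** x) by apply: sgM sH (RtH _ tR) Hx.
    have e : rep (rep (t ** x) ** y) = rep (t ** (x ** y)).
      apply: rep_eq; have [h _] := rep_spec _ txH; have := sgV sK h.
      by rewrite !invM !invK !mulA mulgK; exact: id.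
    have := sgM sA (Qx t tR) (Qy _ (rep_in _ txH)).
    by rewrite e !mulA mulgKV; exact: id.
  - move=> x [Hx Qx]; split; first exact: sgV sH Hx.
    move=> t tR.
    have tiH : H (t ** inv x) by apply: sgM sH (RtH _ tR) (sgV sH Hx).
    have [h _] := rep_spec _ tiH.
    have K1 : K (rep (t ** inv x) ** x ** inv t).
      by have := sgV sK h; rewrite !invM !invK !mulA; exact: id.
    have e : rep (rep (t ** inv x) ** x) = t by rewrite (rep_eq _ _ K1) Rt_rep.
    have := sgV sA (Qx _ (rep_in _ tiH)); rewrite e.
    by rewrite !invM !invK !mulA; exact: id.
have sQ' : abs_gen mul inv one (range s) `<=` Q.
  apply: abs_gen_min => // _ [j _ <-]; split; first exact: Hs.
  move=> t tR; apply: abs_gen_incl; apply: rgen; apply: allpairs_f => //.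
  by rewrite mem_enum.
exists (size Sch), gen.
apply/seteqP; split.
  apply: (top_gen_min sK cK) => _ [k _ <-].
  have /allpairsP [[t j] [/= tR _ ->]] := genS k.
  have tsH : H (t ** s j) by apply: sgM sH (RtH _ tR) (Hs j).
  have [h _] := rep_spec _ tsH; exact: h.
move=> x Kx B Bx.
have Hx : H x := KH _ Kx.
have Ux : U x by move: Kx; rewrite KE => -[].
have nU : nbhs x U by exact: open_nbhs_nbhs.
have Hcl : closure (abs_gen mul inv one (range s)) x by move: Hx; rewrite -sE; exact: id.
have [y [gy [By Uy]]] := Hcl _ (filterI Bx nU).
exists y; split => //.
have Hy : H y by rewrite -sE; exact: subset_closure.
have Ky : K y by rewrite KE; split.
have [_ Qy] := sQ' _ gy.
have := Qy one one_Rt; rewrite mul1g rep_K // inv1 mulg1; exact.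
Qed.

End Main4.


Local Open Scope classical_set_scope.

Section Main5.
Variables (T : topologicalType) (mul : T -> T -> T) (inv : T -> T) (one : T) (p : nat).
Hypothesis Hpp : pro_p_group mul inv one p.
Local Notation "x ** y" := (mul x y) (at level 40, left associativity).
Local Notation subgroup := (is_subgroup mul inv one).
Local Notation maxl := (maximal_open_subgroup mul inv one).
Local Notation osub := (open_subgroup_of mul inv one).
Local Notation Phi := (Defs.Frattini mul inv one).
Local Notation pw := (pw mul one).
Let Hpf := pp_pf Hpp.
Let Htg := pf_tg Hpf.
Let Hg := tg_grp Htg.
Local Notation mulA := (tmulA Hg).
Local Notation mul1g := (tmul1g Hg).
Local Notation mulVg := (tmulVg Hg).
Local Notation mulgV := (tmulgV Hg).
Local Notation mulg1 := (tmulg1 Hg).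
Local Notation mulKg := (tmulKg Hg).
Local Notation mulKVg := (tmulKVg Hg).
Local Notation mulgK := (tmulgK Hg).
Local Notation mulgKV := (tmulgKV Hg).
Local Notation invK := (tinvK Hg).
Local Notation invM := (tinvM Hg).
Local Notation inv1 := (tinv1 Hg).
Local Notation pwD := (pwD Hg).
Local Notation pwM := (pwM Hg).
Local Notation pwSr := (pwSr Hg).




Lemma d_spec H : fin_gen mul inv one H ->
  gen_by mul inv one H (d mul inv one H) /\
  forall m, gen_by mul inv one H m -> (d mul inv one H <= m)%N.
Proof.
move=> fgH.
pose Pb : pred nat := fun n => `[< gen_by mul inv one H n >].
have ex : exists n, Pb n by case: fgH => n gn; exists n; apply/asboolP.
case: (ex_minnP ex) => n0 /asboolP Pn0 min0.
have : [set n | gen_by mul inv one H n /\ forall m, gen_by mul inv one H m -> (n <= m)%N]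
         (xget 0%N [set n | gen_by mul inv one H n /\
            forall m, gen_by mul inv one H m -> (n <= m)%N]).
  apply: (@xgetI _ 0%N _ n0); split => // m gm; apply: min0; exact/asboolP.
by [].
Qed.

Lemma chain H K n : Frattini_injective mul inv one -> fin_gen mul inv one H ->
  osub H K -> gen_by mul inv one K n -> gen_by mul inv one H n.
Proof.
move=> FI fgH oK gK.
have [sK KH [U [oU KE]]] := oK.
have [sH cH] := fin_gen_sub Hpp fgH.
have U1 : U one by have := sg1 sK; rewrite KE => -[].
have [W [k [f [sW nW oW WU hf]]]] := setup Hpp oU U1.
have WK : forall y, W y -> H y -> K y by move=> y Wy Hy; rewrite KE; split => //; exact: WU.
have cK : closed K by apply: (open_in_closed Htg sH cH sK KH); exists U.
have tK : top_gen mul inv one K = K.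
  apply/seteqP; split; first exact: (top_gen_min sK cK).
  exact: top_gen_incl.
suff : forall N0 L, (#|img Hg sW hf L| <= N0)%N -> fin_gen mul inv one L ->
    K `<=` L -> L `<=` H -> gen_by mul inv one L n.
  by move=> /(_ _ H (leqnn _) fgH KH (fun _ h => h)).
elim=> [|N0 IH] L cL fgL KL LH.
  have : phi Hg sW hf one \in img Hg sW hf L by apply: mem_img; exact: sg1 (fin_gen_sub Hpp fgL).1.
  by move: cL; rewrite leqn0 => /eqP/cards0_eq ->; rewrite inE.
have [e|KneL] := pselect (K = L); first by rewrite -e.
have [sL cLc] := fin_gen_sub Hpp fgL.
have [M [mM tKM]] : exists M, maxl L M /\ top_gen mul inv one K `<=` M.
  apply: (max_exists Hpp sL cLc) => //; by rewrite tK.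
rewrite tK in tKM.
have fgM : fin_gen mul inv one M := schreier Hpp fgL (max_osub mM).
have sM := max_sub mM; have ML := max_incl mM.
have WM : forall y, W y -> L y -> M y by move=> y Wy Ly; apply: tKM; apply: WK => //; exact: LH.
have ltc : (#|img Hg sW hf M| < #|img Hg sW hf L|)%N.
  apply: fintype.proper_card; apply/andP; split; first exact: img_sub.
  apply/negP => sLM.
  apply: (max_neq mM); apply/seteqP; split => //.
  exact: (img_eq_sub nW sL sM ML WM (fun _ h => h) sLM).
have [m gm] : gen_by mul inv one M n.
  apply: (IH M) => //; first by rewrite -ltnS; exact: leq_trans ltc cL.
  by move=> y /ML /LH.
exact: (main_step Hpp FI sL cLc fgL mM gm).
Qed.

End Main5.

Theorem mainTheorem11 (p : nat) (T : topologicalType) (mul : T -> T -> T)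
    (inv : T -> T) (one : T) :
  pro_p_group mul inv one p ->
  Frattini_injective mul inv one ->
  forall H : set T, fin_gen mul inv one H ->
  forall K : set T, open_subgroup_of mul inv one H K ->
  (d mul inv one H <= d mul inv one K)%N.
Proof.
move=> Hpp FI H fgH K oK.
have fgK := schreier Hpp fgH oK.
have [gK _] := d_spec fgK.
have [_ minH] := d_spec fgH.
apply: minH; exact: (chain Hpp FI fgH oK gK).
Qed.
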